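(* Fix $q\in(0,1)$. For all $i_1,i_2,j_1,j_2\in\mathbb{Z}_{\ge0}$, as rational functions of $(s_1,s_2)$, $$R_{\frac{s_2}{s_1},s_1,s_2}(i_1,i_2;j_1,j_2)=\mathbf{1}_{i_1+j_2=i_2+j_1}\cdot\mathbf{1}_{j_2\le j_1}\cdot\varphi_{q,s_2^2/s_1^2,\,s_2^2}(j_2\mid j_1).$$
   Context: $q$-Pochhammer symbols: $(a;q)_k=\prod_{i=0}^{k-1}(1-aq^i)$ for $k\ge1$, $(a;q)_0=1$, and for $k\le-1$, $(a;q)_k=1/(a/q;1/q)_{-k}$. The regularized terminating series is ${}_{r+1}\bar\phi_r\bigl(q^{-n};a_1,\dots,a_r;b_1,\dots,b_r\mid q,z\bigr)=\sum_{k=0}^{n}\frac{z^k(q^{-n};q)_k}{(q;q)_k}\prod_{i=1}^r(a_i;q)_k(b_iq^k;q)_{n-k}$. The cross vertex weights are $$R_{z,s_1,s_2}(i_1,i_2;j_1,j_2)=\mathbf{1}_{j_1+i_2=i_1+j_2}\,\frac{(-s_1z)^{j_1}q^{\frac12 j_1(j_1+2i_2-1)}s_2^{\,i_2+j_2-i_1}(zs_1s_2^{-1};q)_{j_2-j_1}}{(q;q)_{i_1}(zs_1s_2;q)_{i_1+j_2}(s_1^{-2}q^{1-i_2};q)_{i_2-j_2}}\,{}_4\bar\phi_3\!\left(\begin{matrix}q^{-i_1};q^{-j_1},zs_1^{-1}s_2,qz^{-1}s_1^{-1}s_2\\ s_2^2,q^{1+j_2-j_1},s_1^{-2}q^{1-i_1-j_2}\end{matrix}\Big|q,q\right).$$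 The $q$-beta-binomial weights are, for $m\in\mathbb{Z}_{\ge0}$ and $0\le j\le m$, $\varphi_{q,\mu,\nu}(j\mid m)=\mu^j\frac{(\nu/\mu;q)_j(\mu;q)_{m-j}}{(\nu;q)_m}\frac{(q;q)_m}{(q;q)_j(q;q)_{m-j}}$ (where $\mu^j(\nu/\mu;q)_j$ means $\prod_{i=0}^{j-1}(\mu-\nu q^i)$), and $\varphi_{q,\mu,\nu}(j\mid m)=0$ for $j>m$. *)

(* Defs.v *)
From HB Require Import structures.
From mathcomp Require Import all_boot all_order all_algebra.
From mathcomp Require Import fraction.
Set Implicit Arguments. Unset Strict Implicit. Unset Printing Implicit Defensive.
Import Order.TTheory GRing.Theory Num.Theory.
Local Open Scope ring_scope.

Section Weights.
Variable F : fieldType.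

Definition qpoch (a q : F) (k : int) : F :=
  match k with
  | Posz n => \prod_(i < n) (1 - a * q ^+ i)
  | Negz n => (\prod_(i < n.+1) (1 - (a / q) * (q^-1) ^+ i))^-1
  end.

(* regularized terminating series r+1 phibar r (q^{-n}; a; b | q, z),
   with a = [:: a_1; ...; a_r], b = [:: b_1; ...; b_r] *)
Definition phibar (n : nat) (a b : seq F) (q z : F) : F :=
  \sum_(k < n.+1)
    z ^+ k * qpoch (q ^- n) q k / qpoch q q k *
    \prod_(i < size a) (qpoch a`_i q k * qpoch (b`_i * q ^+ k) q (n - k)%N).

Definition Rweight (q z s1 s2 : F) (i1 i2 j1 j2 : nat) : F :=
  (j1 + i2 == i1 + j2)%N%:R *
  ((- (s1 * z)) ^+ j1 * q ^+ ((j1 * (j1 + 2 * i2 - 1)) %/ 2)%N *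
   s2 ^ (i2%:Z + j2%:Z - i1%:Z) *
   qpoch (z * s1 / s2) q (j2%:Z - j1%:Z) /
   (qpoch q q i1 * qpoch (z * s1 * s2) q (i1 + j2)%N *
    qpoch (s1 ^- 2 * q ^ (1 - i2%:Z)) q (i2%:Z - j2%:Z)) *
   phibar i1 [:: q ^- j1; z / s1 * s2; q / z / s1 * s2]
             [:: s2 ^+ 2; q ^ (1 + j2%:Z - j1%:Z); s1 ^- 2 * q ^ (1 - i1%:Z - j2%:Z)]
             q q).

Definition qbb (q mu nu : F) (j m : nat) : F :=
  if (j <= m)%N then
    (\prod_(i < j) (mu - nu * q ^+ i)) * qpoch mu q (m - j)%N / qpoch nu q m *
    (qpoch q q m / (qpoch q q j * qpoch q q (m - j)%N))
  else 0.

End Weights.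

(* The field of rational functions in two variables (s1, s2) over R:
   s1 := constant-in-'X polynomial 'X (inner variable), s2 := outer 'X. *)
Definition ratfun2 (R : realFieldType) := {fraction {poly {poly R}}}.
Definition rf_const (R : realFieldType) (c : R) : ratfun2 R := FracField.tofrac (c%:P%:P).
Definition rf_s1 (R : realFieldType) : ratfun2 R := FracField.tofrac (('X : {poly R})%:P).
Definition rf_s2 (R : realFieldType) : ratfun2 R := FracField.tofrac ('X : {poly {poly R}}).

(* Main.v *)
Require Import Defs.
From HB Require Import structures.
From mathcomp Require Import all_boot all_order all_algebra.
From mathcomp Require Import fraction.
From mathcomp.algebra_tactics Require Import ring.
From mathcomp Require Import zify.
Set Implicit Arguments. Unset Strict Implicit. Unset Printing Implicit Defensive.
Import Order.TTheory GRing.Theory Num.Theory.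
Local Open Scope ring_scope.

Section Poch.
Variable F : fieldType.
Implicit Types (x p : F).

Definition P x p n := \prod_(i < n) (1 - x * p ^+ i).

Lemma P0 x p : P x p 0 = 1.
Proof. by rewrite /P big_ord0. Qed.

Lemma PS x p n : P x p n.+1 = P x p n * (1 - x * p ^+ n).
Proof. by rewrite /P big_ord_recr. Qed.

Lemma PSl x p n : P x p n.+1 = (1 - x) * P (x * p) p n.
Proof.
rewrite /P big_ord_recl expr0 mulr1; congr (_ * _).
by apply: eq_bigr => i _; rewrite exprS mulrA.
Qed.

Lemma Padd x p m k : P x p (m + k) = P x p m * P (x * p ^+ m) p k.
Proof.
rewrite /P big_split_ord /=; congr (_ * _).
by apply: eq_bigr => i _; rewrite exprD mulrA.
Qed.

Lemma P_neq0 x p n : (forall i, (i < n)%N -> 1 - x * p ^+ i != 0) -> P x p n != 0.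
Proof. by move=> h; rewrite /P prodf_seq_neq0; apply/allP => i _; apply: h. Qed.

Lemma P_eq0 x p n i : (i < n)%N -> x * p ^+ i = 1 -> P x p n = 0.
Proof.
move=> lt h; rewrite /P (bigD1 (Ordinal lt)) //= h subrr mul0r //.
Qed.

Lemma nz_by (x u y : F) : u != 0 -> y != 0 -> x = u * y -> x != 0.
Proof. by move=> hu hy ->; rewrite mulf_neq0. Qed.

End Poch.


Section Saalschutz.
Variable F : fieldType.
Variables (q a b c : F).
Hypotheses (hq : q != 0) (ha : a != 0) (hb : b != 0) (hc : c != 0).
Hypothesis hqq : forall i, 1 - q ^+ i.+1 != 0.
Hypothesis hcq : forall i, 1 - c * q ^+ i != 0.
Hypothesis hcab : forall i, 1 - c / (a * b) * q ^+ i != 0.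
Hypothesis hab1 : 1 - a * b * q / c != 0.

Definition Ssum n k := q ^+ k * P (q ^+ n)^-1 q k * P a q k * P b q k /
  (P q q k * P c q k * P (a * b * q / (c * q ^+ n)) q k).
Definition rhs n := P (c / a) q n * P (c / b) q n / (P c q n * P (c / (a * b)) q n).
Definition rho n := (1 - c * q ^+ n / a) * (1 - c * q ^+ n / b) /
  ((1 - c * q ^+ n) * (1 - c * q ^+ n / (a * b))).
Definition kap n := - q ^+ n * c * (1 - a * b / (c * q ^+ n)) /
  (a * b * (1 - c * q ^+ n) * (1 - c * q ^+ n / (a * b)) * (1 - 1 / (q ^+ n * q))).
Definition Hc n k := kap n * P (q ^+ n.+1)^-1 q k * P a q k * P b q k *
  (1 - q ^+ k) * (1 - c * q ^+ k / q) /
  (P q q k * P c q k * P (a * b / (c * q ^+ n)) q k).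

Lemma qn_neq0 n : q ^+ n != 0.
Proof. exact: expf_neq0. Qed.

Lemma ab_nz : a * b != 0. Proof. exact: mulf_neq0. Qed.

Lemma hab_neg j : 1 - a * b / (c * q ^+ j) != 0.
Proof.
have hj := qn_neq0 j.
apply: (@nz_by _ _ (- (a * b / (c * q ^+ j))) (1 - c / (a * b) * q ^+ j)).
- by rewrite oppr_eq0 !mulf_neq0 ?invr_neq0 ?mulf_neq0.
- exact: hcab.
- by field; rewrite hj hc ha hb.
Qed.

Lemma R1 n k : P (q ^+ n)^-1 q k =
  P (q ^+ n.+1)^-1 q k * (1 - (q ^+ n.+1)^-1 * q ^+ k) / (1 - (q ^+ n.+1)^-1).
Proof.
have h1 : 1 - (q ^+ n.+1)^-1 != 0.
  apply: (@nz_by _ _ (- (q ^+ n.+1)^-1) (1 - q ^+ n.+1)).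
  - by rewrite oppr_eq0 invr_neq0 // qn_neq0.
  - exact: hqq.
  - by field; rewrite qn_neq0.
rewrite -PS PSl mulrAC divff // mul1r; congr P.
by rewrite exprS invfM mulrAC mulVf // mul1r.
Qed.

Lemma R2 n k : P (a * b * q / (c * q ^+ n)) q k =
  P (a * b / (c * q ^+ n)) q k * (1 - a * b / (c * q ^+ n) * q ^+ k) /
  (1 - a * b / (c * q ^+ n)).
Proof.
rewrite -PS PSl [RHS]mulrC mulrA mulVf ?hab_neg // mul1r; congr P.
by rewrite mulrAC.
Qed.

Lemma hE_fac n i : (i <= n.+1)%N -> 1 - a * b / (c * q ^+ n) * q ^+ i != 0.
Proof.
rewrite leq_eqVlt => /orP [/eqP -> | hi].
  have -> : a * b / (c * q ^+ n) * q ^+ n.+1 = a * b * q / c.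
    by rewrite exprSr; field; rewrite hc qn_neq0.
  exact: hab1.
rewrite ltnS in hi.
have -> : a * b / (c * q ^+ n) * q ^+ i = a * b / (c * q ^+ (n - i)).
  by rewrite -{1}(subnK hi) exprD; field; rewrite hc !qn_neq0.
exact: hab_neg.
Qed.

Lemma step n k : (k <= n.+1)%N -> Ssum n.+1 k - rho n * Ssum n k = Hc n k.+1 - Hc n k.
Proof.
move=> hk.
have e1 : a * b * q / (c * q ^+ n.+1) = a * b / (c * q ^+ n).
  by rewrite exprSr; field; rewrite hc qn_neq0.
rewrite /Ssum /Hc e1 (R1 n k) (R2 n k) !PS.
have hQ : P q q k != 0.
  by apply: P_neq0 => i _; rewrite -exprS.
have hC : P c q k != 0 by apply: P_neq0 => i _.
have hE : P (a * b / (c * q ^+ n)) q k != 0.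
  by apply: P_neq0 => i hi; apply: hE_fac; apply: leq_trans hk; apply: ltnW.
have hEk := hE_fac hk.
have hqk : 1 - q * q ^+ k != 0 by rewrite -exprS.
have hck := hcq k.
have hw := qn_neq0 n.
have h1 : q ^+ n * q - 1 != 0.
  apply: (@nz_by _ _ (-1) (1 - q ^+ n.+1)); rewrite ?oppr_eq0 ?oner_eq0 //.
  by rewrite exprSr; ring.
have h2 : a * b - c * q ^+ n != 0.
  apply: (@nz_by _ _ (- (c * q ^+ n)) (1 - a * b / (c * q ^+ n))).
  - by rewrite oppr_eq0 mulf_neq0.
  - exact: hab_neg.
  - by field; rewrite hc hw.
have h3 : c * q ^+ n - a * b * q ^+ k != 0.
  apply: (@nz_by _ _ (c * q ^+ n) (1 - a * b / (c * q ^+ n) * q ^+ k)).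
  - by rewrite mulf_neq0.
  - exact: hEk.
  - by field; rewrite hc hw.
have h4 : c * q ^+ n - a * b != 0 by rewrite -oppr_eq0 opprB.
have h5 := hcq n.
rewrite /rho /kap.
move: hQ hC hE hEk hqk hck hw h1 h2 h3 h4 h5.
set X := P (q ^+ n.+1)^-1 q k.
set A := P a q k. set B := P b q k. set Q := P q q k. set C := P c q k.
set E := P (a * b / (c * q ^+ n)) q k.
rewrite [q ^+ k.+1]exprS [q ^+ n.+1]exprS.
set y := q ^+ k. set w := q ^+ n.
move=> hQ hC hE hEk hqk hck hw h1 h2 h3 h4 h5.
by field; rewrite hE hC hQ hq hw ha hb h1 h2 h5 hc h3 hck hqk h4.
Qed.
Lemma Sn_last n : Ssum n n.+1 = 0.
Proof.
rewrite /Ssum (@P_eq0 _ _ _ _ n) ?mulr0 ?mul0r //.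
by rewrite mulVf // qn_neq0.
Qed.

Lemma H0 n : Hc n 0 = 0.
Proof. by rewrite /Hc expr0 subrr !(mulr0, mul0r). Qed.

Lemma Hlast n : Hc n n.+2 = 0.
Proof.
rewrite /Hc (@P_eq0 _ _ _ _ n.+1) ?mulr0 ?mul0r //.
by rewrite mulVf // qn_neq0.
Qed.

Lemma rhsS n : rhs n.+1 = rho n * rhs n.
Proof.
rewrite /rhs /rho !PS.
have hC : P c q n != 0 by apply: P_neq0 => i _.
have hD : P (c / (a * b)) q n != 0 by apply: P_neq0 => i _.
have h1 := hcq n. have h2 := hcab n.
have hw := qn_neq0 n.
have h3 : a * b - c * q ^+ n != 0.
  apply: (@nz_by _ _ (a * b) (1 - c / (a * b) * q ^+ n)) => //.
  - exact: ab_nz.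
  - by field; rewrite ha hb.
move: hC hD h1 h2 hw h3.
set A := P (c / a) q n. set B := P (c / b) q n. set C := P c q n.
set D := P (c / (a * b)) q n. set w := q ^+ n.
move=> hC hD h1 h2 hw h3.
by field; rewrite ?hC ?hD ?h1 ?h2 ?hw ?h3 ?ha ?hb.
Qed.

Lemma saal n : \sum_(k < n.+1) Ssum n k = rhs n.
Proof.
elim: n => [|n IH].
  by rewrite big_ord1 /Ssum /rhs !P0 expr0 !mul1r invr1.
rewrite rhsS -IH.
apply/eqP; rewrite -subr_eq0; apply/eqP.
have -> : \sum_(k < n.+1) Ssum n k = \sum_(k < n.+2) Ssum n k.
  by rewrite [in RHS]big_ord_recr /= Sn_last addr0.
rewrite mulr_sumr -sumrB -(big_mkord xpredT (fun k => Ssum n.+1 k - rho n * Ssum n k)).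
rewrite (telescope_sumr_eq (Hc n)) // ?H0 ?Hlast ?subrr //.
by move=> k /andP [_ hk]; apply: step.
Qed.
End Saalschutz.


Section Help.
Variable F : fieldType.
Implicit Types (x p : F).

Definition G p m := \prod_(i < m) p ^+ i.

Lemma GS p m : G p m.+1 = G p m * p ^+ m.
Proof. by rewrite /G big_ord_recr. Qed.

Lemma expz_sub x a b : x != 0 -> x ^ (a%:Z - b%:Z) = x ^+ a / x ^+ b.
Proof. by move=> hx; rewrite expfzDr // -exprnN. Qed.

Lemma qpochP x p n : qpoch x p (Posz n) = P x p n.
Proof. by []. Qed.

Lemma qpoch_neg x p d : qpoch x p (- d%:Z) = (P (x / p) p^-1 d)^-1.
Proof.
case: d => [|d]; first by rewrite (_ : - 0%:Z = 0%:Z) // qpochP /P !big_ord0 invr1.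
by rewrite -NegzE.
Qed.

Lemma Lflip x p m : x != 0 -> p != 0 ->
  P x p m = (-1) ^+ m * x ^+ m * G p m * P x^-1 p^-1 m.
Proof.
move=> hx hp; elim: m => [|m IH]; first by rewrite /P /G !big_ord0 !expr0 !mul1r.
rewrite !PS GS IH !exprS exprVn.
have hpm : p ^+ m != 0 by rewrite expf_neq0.
by field; rewrite hx hpm.
Qed.

Lemma Lrev x p m : p != 0 -> P x p m = P (x * p ^+ m.-1) p^-1 m.
Proof.
move=> hp; rewrite /P (reindex_inj rev_ord_inj) /=.
apply: eq_bigr => i _; congr (1 - _).
case: m i => [[]//|m] i /=.
rewrite -mulrA; congr (_ * _).
have e : p ^+ m = p ^+ (m - i) * p ^+ i.
  by rewrite -exprD subnK // -ltnS.
by rewrite exprVn e mulfK // expf_neq0.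
Qed.


Lemma Gsq p m : G p m ^+ 2 * p ^+ m = p ^+ (m * m).
Proof.
elim: m => [|m IH]; first by rewrite /G big_ord0 expr1n mul1r.
rewrite GS exprMn.
rewrite (_ : G p m ^+ 2 * p ^+ m ^+ 2 * p ^+ m.+1 = (G p m ^+ 2 * p ^+ m) * (p ^+ m ^+ 2 * p)); last by rewrite [p ^+ m.+1]exprS; ring.
rewrite IH -exprM -exprSr -exprD; congr (_ ^+ _).
by rewrite mulSn mulnS; lia.
Qed.

Lemma GD p a b : G p (a + b) = G p a * G p b * p ^+ (a * b).
Proof.
elim: b => [|b IH]; first by rewrite addn0 /G big_ord0 mulr1 muln0 expr0 mulr1.
by rewrite addnS !GS IH mulnS !exprD; ring.
Qed.

Lemma Ginv p m : p != 0 -> G p^-1 m = (G p m)^-1.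
Proof.
move=> hp; rewrite /G -prodfV; apply: eq_bigr => i _; by rewrite exprVn.
Qed.

Lemma G_tri p m : G p m = p ^+ 'C(m, 2).
Proof.
elim: m => [|m IH]; first by rewrite /G big_ord0.
by rewrite GS IH -exprD binS bin1 addnC.
Qed.

Lemma prod_mu (mu nu q : F) j : mu != 0 ->
  \prod_(i < j) (mu - nu * q ^+ i) = mu ^+ j * P (nu / mu) q j.
Proof.
move=> hm; elim: j => [|j IH]; first by rewrite big_ord0 P0 expr0 mulr1.
by rewrite big_ord_recr /= IH PS exprSr; field.
Qed.

Lemma qpoch_T (t q : F) n j : q != 0 -> P t q^-1 j != 0 ->
  qpoch (t * (q ^+ 1 / q ^+ n)) q (n%:Z - j%:Z) = P t q^-1 n / P t q^-1 j.
Proof.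
move=> hq hj; have [hjn|hnj] := leqP j n.
  have [k ->] : exists k, n = (j + k)%N by exists (n - j)%N; rewrite subnKC.
  rewrite subzn ?leq_addr // addKn qpochP Padd [RHS]mulrAC divff // mul1r.
  case: k => [|k]; first by rewrite /P !big_ord0.
  rewrite Lrev //; congr P.
  rewrite -!exprVn /=.
  rewrite !exprVn exprD expr1 [q ^+ k.+1]exprS; field.
  by rewrite !expf_neq0.
move: hj; have [k ->] : exists k, j = (n + k)%N by exists (j - n)%N; rewrite subnKC // ltnW.
move=> hj.
have -> : n%:Z - (n + k)%N%:Z = - k%:Z.
  by rewrite PoszD opprD addrA subrr add0r.
rewrite qpoch_neg Padd.
move: hj; rewrite Padd mulf_eq0 negb_or => /andP[hn hk].
rewrite [in RHS]invfM [in RHS]mulrA mulfV // mul1r.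
congr (_^-1); congr P.
rewrite exprVn expr1; field.
by rewrite expf_neq0.
Qed.

End Help.


Section Main.
Variable F : fieldType.
Variables q s1 s2 : F.
Hypotheses (hq : q != 0) (hs1 : s1 != 0) (hs2 : s2 != 0).
Hypothesis hqq : forall i, 1 - q ^+ i.+1 != 0.
Hypothesis h1 : forall i, 1 - s1 ^+ 2 * q ^+ i != 0.
Hypothesis h1q : s1 ^+ 2 != q.
Hypothesis h2 : forall i, 1 - s2 ^+ 2 * q ^+ i != 0.

Definition mu := s2 ^+ 2 / s1 ^+ 2.
Definition nu := s2 ^+ 2.
Definition tq := (s1 ^+ 2)^-1.

Definition fterm n d j2 (k : nat) :=
  q ^+ k * P (q ^+ (d + n))^-1 q k / P q q k *
  (P (q ^+ (j2 + d))^-1 q k * P (nu * q ^+ k) q (d + n - k) *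
   (P mu q k * P (q ^+ 1 / q ^+ d * q ^+ k) q (d + n - k) *
    (P q q k * P (tq * (q ^+ 1 / q ^+ (d + n + j2)) * q ^+ k) q (d + n - k)))).

Lemma phibar_f n d j2 :
  phibar (d + n) [:: (q ^+ (j2 + d))^-1; mu; q]
    [:: nu; q ^+ 1 / q ^+ d; tq * (q ^+ 1 / q ^+ (d + n + j2))] q q =
  \sum_(k < (d + n).+1) fterm n d j2 k.
Proof.
rewrite /phibar; apply: eq_bigr => k _.
by rewrite !big_ord_recl big_ord0 /= mulr1.
Qed.

Lemma Ptail (y p : F) m n : (m <= n)%N -> P y p m != 0 ->
  P (y * p ^+ m) p (n - m) = P y p n / P y p m.
Proof.
move=> hmn hm; have [k ->] : exists k, n = (m + k)%N by exists (n - m)%N; rewrite subnKC.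
by rewrite addKn Padd [RHS]mulrAC divff // mul1r.
Qed.

Lemma tt_nz j : 1 - tq / q ^+ j != 0.
Proof.
apply: (@nz_by _ _ (- (tq / q ^+ j)) (1 - s1 ^+ 2 * q ^+ j)) => //.
- by rewrite oppr_eq0 /tq mulf_neq0 ?invr_neq0 ?expf_neq0.
- by rewrite /tq; field; rewrite ?expf_neq0 ?oner_neq0 ?hq ?hs1 ?hs2.
Qed.

Lemma fterm_zero n d j2 k : (k < d)%N -> fterm n d j2 k = 0.
Proof.
move=> hk; rewrite /fterm.
rewrite [P (q ^+ 1 / q ^+ d * q ^+ k) q _](@P_eq0 _ _ _ _ (d - 1 - k)); last first.
- have ed : q ^+ d = q ^+ 1 * q ^+ (k + (d - 1 - k)).
    by rewrite -exprD; congr (_ ^+ _); lia.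
  rewrite ed exprD; field.
  by rewrite ?expf_neq0 ?oner_neq0 ?hq ?hs1 ?hs2.
- by lia.
by rewrite !(mulr0, mul0r).
Qed.

Definition aa j2 := (q ^+ j2)^-1.
Definition bb d := mu * q ^+ d.
Definition cc d := nu * q ^+ d.
Definition ee n d j2 := aa j2 * bb d * q / (cc d * q ^+ n).

Definition K1 n d j2 := q ^+ d * P (q ^+ (d + n))^-1 q d * P (q ^+ (j2 + d))^-1 q d *
  P mu q d * P (cc d) q n * P q q n * P (ee n d j2) q n.

Lemma mu_nz : mu != 0.
Proof. by rewrite /mu mulf_neq0 ?invr_neq0 ?expf_neq0. Qed.

Lemma PqqNZ m : P q q m != 0.
Proof. by apply: P_neq0 => i _; rewrite -exprS. Qed.

Lemma PccNZ d m : P (cc d) q m != 0.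
Proof. by apply: P_neq0 => i _; rewrite /cc -mulrA -exprD. Qed.

Lemma PeeNZ n d j2 m : (m <= n)%N -> P (ee n d j2) q m != 0.
Proof.
move=> hm; apply: P_neq0 => i hi.
have -> : ee n d j2 * q ^+ i = tq / q ^+ (j2 + n - i.+1).
  rewrite /ee /aa /bb /cc /mu /nu /tq.
  have -> : q ^+ n = q ^+ (n - i.+1) * q ^+ i * q.
    by rewrite -exprD -exprSr; congr (_ ^+ _); lia.
  have -> : q ^+ (j2 + n - i.+1) = q ^+ j2 * q ^+ (n - i.+1).
    by rewrite -exprD; congr (_ ^+ _); lia.
  by field; rewrite ?expf_neq0 ?oner_neq0 ?hq ?hs1 ?hs2.
exact: tt_nz.
Qed.

Lemma fterm_shift n d j2 m : (m <= n)%N ->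
  fterm n d j2 (m + d) = K1 n d j2 * Ssum q (aa j2) (bb d) (cc d) n m.
Proof.
move=> hm; rewrite /fterm /K1 /Ssum.
rewrite (_ : (d + n - (m + d) = n - m)%N); last by lia.
rewrite (addnC m d) !Padd.
rewrite (_ : (q ^+ (d + n))^-1 * q ^+ d = (q ^+ n)^-1); last first.
  by rewrite exprD; field; rewrite ?expf_neq0 ?oner_neq0 ?hq ?hs1 ?hs2.
rewrite (_ : (q ^+ (j2 + d))^-1 * q ^+ d = aa j2); last first.
  by rewrite /aa exprD; field; rewrite ?expf_neq0 ?oner_neq0 ?hq ?hs1 ?hs2.
rewrite (_ : nu * q ^+ (d + m) = cc d * q ^+ m); last by rewrite /cc exprD mulrA.
rewrite (_ : q ^+ 1 / q ^+ d * q ^+ (d + m) = q * q ^+ m); last first.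
  by rewrite exprD expr1; field; rewrite ?expf_neq0 ?oner_neq0 ?hq ?hs1 ?hs2.
rewrite (_ : tq * (q ^+ 1 / q ^+ (d + n + j2)) * q ^+ (d + m) = ee n d j2 * q ^+ m); last first.
  rewrite /ee /aa /bb /cc /mu /nu /tq !exprD expr1; field.
  by rewrite ?expf_neq0 ?oner_neq0 ?hq ?hs1 ?hs2.
rewrite !Ptail // ?PqqNZ ?PccNZ ?PeeNZ //.
rewrite (_ : mu * q ^+ d = bb d) //.
rewrite (_ : q ^+ (d + m) = q ^+ d * q ^+ m); last by rewrite exprD.
have := PqqNZ m; have := PccNZ d m; have := @PeeNZ n d j2 m hm.
have : P (q * q ^+ d) q m != 0.
  by apply: P_neq0 => i _; rewrite -mulrA -exprD -exprS.
rewrite -/(ee n d j2).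
move=> hA hB hC hD.
by field; rewrite hA hB hC hD PqqNZ.
Qed.
Lemma saal_app n d j2 :
  \sum_(m < n.+1) Ssum q (aa j2) (bb d) (cc d) n m = rhs q (aa j2) (bb d) (cc d) n.
Proof.
apply: saal => //.
- by rewrite /aa invr_neq0 // expf_neq0.
- by rewrite /bb mulf_neq0 ?mu_nz // expf_neq0.
- by rewrite /cc /nu mulf_neq0 // expf_neq0.
- by move=> i; rewrite /cc /nu -mulrA -exprD.
- move=> i; rewrite (_ : cc d / (aa j2 * bb d) * q ^+ i = s1 ^+ 2 * q ^+ (j2 + i)) //.
  rewrite /cc /aa /bb /mu /nu !exprD; field.
  by rewrite ?expf_neq0 ?oner_neq0 ?hq ?hs1 ?hs2.
- case: j2 => [|j].
    rewrite (_ : aa 0 * bb d * q / cc d = q / s1 ^+ 2).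
      apply: (@nz_by _ _ (- (s1 ^+ 2)^-1) (q - s1 ^+ 2)).
      + by rewrite oppr_eq0 invr_neq0 // expf_neq0.
      + by rewrite subr_eq0 eq_sym.
      + by field; rewrite ?expf_neq0 ?oner_neq0 ?hq ?hs1 ?hs2.
    rewrite /aa /bb /cc /mu /nu expr0 invr1; field.
    by rewrite ?expf_neq0 ?oner_neq0 ?hq ?hs1 ?hs2.
  rewrite (_ : aa j.+1 * bb d * q / cc d = tq / q ^+ j); first exact: tt_nz.
  rewrite /aa /bb /cc /mu /nu /tq exprS; field.
  by rewrite ?expf_neq0 ?oner_neq0 ?hq ?hs1 ?hs2.
Qed.

Lemma phibar_eval n d j2 :
  phibar (d + n) [:: (q ^+ (j2 + d))^-1; mu; q]
    [:: nu; q ^+ 1 / q ^+ d; tq * (q ^+ 1 / q ^+ (d + n + j2))] q q =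
  K1 n d j2 * rhs q (aa j2) (bb d) (cc d) n.
Proof.
rewrite phibar_f -saal_app mulr_sumr.
rewrite -(big_mkord xpredT (fun k => fterm n d j2 k)).
rewrite (@big_cat_nat _ _ _ d) //= ?leqW ?leq_addr //.
rewrite big1_seq ?add0r; last first.
  move=> k /andP [_]; rewrite mem_index_iota => /andP [_ hk].
  exact: fterm_zero.
have := big_addn 0 (d + n).+1 d xpredT (fun k => fterm n d j2 k).
rewrite add0n => ->.
rewrite (_ : ((d + n).+1 - d = n.+1)%N); last by lia.
rewrite big_mkord; apply: eq_bigr => [[m hm]] _ /=.
by apply: fterm_shift.
Qed.
Lemma Pinvq N d : (d <= N)%N ->
  P (q ^+ N)^-1 q d = (-1) ^+ d / q ^+ (N * d) * G q d * (P q q N / P q q (N - d)).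
Proof.
move=> hdN; have [k ->] : exists k, N = (k + d)%N by exists (N - d)%N; rewrite subnK.
clear hdN.
rewrite addnK Lflip ?invr_neq0 ?expf_neq0 // invrK exprVn -exprM.
congr (_ * _); rewrite Padd [RHS]mulrC mulKf ?PqqNZ //.
case: d => [|d]; first by rewrite /P !big_ord0.
rewrite Lrev ?invr_neq0 // invrK; congr P.
rewrite /= exprVn addnS exprS -mulrA exprD mulfK ?expf_neq0 //.
Qed.

Lemma Pq1 d : P (1 / q) q^-1 d = (-1) ^+ d / q ^+ d / G q d * P q q d.
Proof.
have h1q' : 1 / q != 0 by rewrite mulf_neq0 ?invr_neq0 ?oner_neq0.
rewrite Lflip ?invr_neq0 //.
rewrite invf_div divr1 invrK Ginv // expr_div_n expr1n.
by rewrite div1r.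
Qed.

Lemma Pee n d j2 : P (ee n d j2) q n = P (tq * q^-1 ^+ j2) q^-1 n.
Proof.
case: n => [|m]; first by rewrite /P !big_ord0.
rewrite Lrev //; congr P.
rewrite /ee /aa /bb /cc /mu /nu /tq /= !exprVn [q ^+ m.+1]exprS; field.
by rewrite ?expf_neq0 ?oner_neq0 ?hq ?hs1 ?hs2.
Qed.

Lemma tt_nz0 : tq != 0.
Proof. by rewrite /tq invr_neq0 // expf_neq0. Qed.

Lemma exp_nat j1 n :
  ((j1 * (j1 + 2 * n - 1)) %/ 2 = 'C(j1, 2) + j1 * n)%N.
Proof.
rewrite bin2 -divn2.
case: j1 => [|k]; first by rewrite !mul0n div0n.
rewrite (_ : (k.+1 * (k.+1 + 2 * n - 1) = k.+1 * k.+1.-1 + (k.+1 * n) * 2)%N); last first.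
  by rewrite (_ : (k.+1 + 2 * n - 1 = k + n * 2)%N) ?mulnDr ?mulnA //; lia.
by rewrite divnDr ?dvdn_mull // mulnK.
Qed.

Lemma main_abs n d j2 :
  Rweight q (s2 / s1) s1 s2 (d + n) n (j2 + d) j2 =
  qbb q (s2 ^+ 2 / s1 ^+ 2) (s2 ^+ 2) j2 (j2 + d).
Proof.
rewrite /Rweight.
rewrite (_ : (j2 + d + n == d + n + j2)%N = true); last by apply/eqP; lia.
rewrite mul1r.
have ez1 : s2 / s1 * s1 / s2 = 1 by field; rewrite hs1 hs2.
have ez2 : s2 / s1 * s1 * s2 = nu by rewrite /nu; field; rewrite hs1.
have ez3 : s2 / s1 / s1 * s2 = mu by rewrite /mu; field; rewrite hs1.
have ez4 : q / (s2 / s1) / s1 * s2 = q by field; rewrite hs1 hs2.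
have ez5 : - (s1 * (s2 / s1)) = - s2 by field; rewrite hs1.
rewrite ez1 ez2 ez3 ez4 ez5.
rewrite (_ : n%:Z + j2%:Z - (d + n)%:Z = j2%:Z - d%:Z); last by lia.
rewrite (_ : j2%:Z - (j2 + d)%:Z = - d%:Z); last by lia.
rewrite (_ : 1 - n%:Z = 1%:Z - n%:Z) // (_ : 1 + j2%:Z - (j2 + d)%:Z = 1%:Z - d%:Z); last by lia.
rewrite (_ : 1 - (d + n)%:Z - j2%:Z = 1%:Z - (d + n + j2)%:Z); last by lia.
rewrite !expz_sub // qpoch_neg qpoch_T //; last first.
  apply: P_neq0 => i _; rewrite exprVn.
  apply: (@nz_by _ _ (- (tq / q ^+ i)) (1 - s1 ^+ 2 * q ^+ i)) => //.
  - by rewrite oppr_eq0 /tq mulf_neq0 ?invr_neq0 ?expf_neq0.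
  - by rewrite /tq; field; rewrite ?expf_neq0 ?oner_neq0 ?hq ?hs1 ?hs2.
rewrite -/tq -/nu.
rewrite phibar_eval.
rewrite exp_nat [q ^+ ('C(_, 2) + _)]exprD -G_tri GD Pq1 !qpochP.
rewrite (_ : (d + n + j2 = (j2 + d) + n)%N); last by lia.
rewrite [P nu q _]Padd.
rewrite /K1 (@Pinvq (d + n) d) ?leq_addr // (@Pinvq (j2 + d) d) ?leq_addl //.
rewrite addKn addnK Pee.
rewrite /rhs.
rewrite (_ : cc d / aa j2 = nu * q ^+ (j2 + d)); last first.
  by rewrite /cc /aa exprD; field; rewrite ?expf_neq0 ?oner_neq0.
rewrite (_ : cc d / bb d = tq^-1); last first.
  by rewrite /cc /bb /mu /nu /tq; field; rewrite ?expf_neq0 ?oner_neq0 ?hq ?hs1 ?hs2.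
rewrite (_ : cc d / (aa j2 * bb d) = (tq * q^-1 ^+ j2)^-1); last first.
  rewrite /cc /aa /bb /mu /nu /tq exprVn; field; by rewrite ?expf_neq0 ?oner_neq0 ?hq ?hs1 ?hs2.
have htt := tt_nz0.
have htq : tq * q^-1 ^+ j2 != 0 by rewrite mulf_neq0 // expf_neq0 // invr_neq0.
have htti : tq^-1 != 0 by rewrite invr_neq0.
have htqi : (tq * q^-1 ^+ j2)^-1 != 0 by rewrite invr_neq0.
rewrite (@Lflip _ tq^-1 q n htti hq) (@Lflip _ (tq * q^-1 ^+ j2)^-1 q n htqi hq) !invrK.
rewrite /qbb leq_addr addKn !qpochP prod_mu; last by rewrite mulf_neq0 // expf_neq0.
rewrite (_ : nu / (nu * tq) = tq^-1); last by rewrite /nu; field; rewrite ?expf_neq0 ?oner_neq0 ?hq ?hs1 ?hs2 ?htt.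
rewrite (@Lflip _ tq^-1 q j2 htti hq) !invrK.
rewrite (_ : mu = nu * tq) //.
have hPqq := PqqNZ.
have hG m : G q m != 0 by rewrite G_tri expf_neq0.
have hPnu m : P nu q m != 0 by apply: P_neq0 => i _; exact: h2.
have hPnu2 m k : P (nu * q ^+ k) q m != 0.
  by apply: P_neq0 => i _; rewrite -mulrA -exprD; exact: h2.
have hPtt m : P tq q^-1 m != 0.
  by apply: P_neq0 => i _; rewrite exprVn; exact: tt_nz.
have hPtt2 m k : P (tq * q^-1 ^+ k) q^-1 m != 0.
  by apply: P_neq0 => i _; rewrite -mulrA -exprD exprVn; exact: tt_nz.
have hPcc m : P (cc d) q m != 0 := PccNZ d m.
move: (hPqq d) (hPqq n) (hPqq j2) (hPqq (d + n)%N) (hPqq (j2 + d)%N) (hG d) (hG n) (hG j2)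
  (hPnu (j2 + d)%N) (hPnu2 n (j2 + d)%N) (hPtt n) (hPtt j2) (hPtt2 n j2) (hPcc n).
rewrite [(- s2) ^+ _]exprD ![(- s2) ^+ _]exprNn !mulnDl !exprD (mulnC n d) -Gsq.
rewrite /tq !exprVn !exprMn ?exprVn -?exprM.
rewrite !mul2n -!addnn !exprD.
rewrite -[(-1) ^+ j2]signr_odd -[(-1) ^+ d]signr_odd -[(-1) ^+ n]signr_odd.
move=> n1 n2 n3 n4 n5 n6 n7 n8 n9 n10 n11 n12 n13 n14.
case: (odd j2); case: (odd d); case: (odd n); rewrite /= ?expr0 ?expr1.
all: by field; rewrite ?expf_neq0 ?oppr_eq0 ?oner_neq0 ?n1 ?n2 ?n3 ?n4 ?n5 ?n6 ?n7 ?n8 ?n9 ?n10 ?n11 ?n12 ?n13 ?n14.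
Qed.

Lemma main_gen i1 i2 j1 j2 :
  Rweight q (s2 / s1) s1 s2 i1 i2 j1 j2 =
  (i1 + j2 == i2 + j1)%N%:R * (j2 <= j1)%N%:R *
  qbb q (s2 ^+ 2 / s1 ^+ 2) (s2 ^+ 2) j2 j1.
Proof.
have [hE|hE] := eqVneq (j1 + i2)%N (i1 + j2)%N; last first.
  rewrite /Rweight (negbTE hE) (_ : (i1 + j2 == i2 + j1)%N = false); last first.
    by apply/negbTE; move: hE; apply: contra => /eqP h; apply/eqP; lia.
  by rewrite !mul0r.
rewrite (_ : (i1 + j2 == i2 + j1)%N = true); last by apply/eqP; lia.
rewrite mul1r.
have [hj|hj] := leqP j2 j1.
  rewrite /= mulr1n mul1r.
  have [d hd] : exists d, j1 = (j2 + d)%N by exists (j1 - j2)%N; rewrite subnKC.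
  subst j1; have -> : i1 = (d + i2)%N by lia.
  exact: main_abs.
rewrite /= mulr0n mul0r.
rewrite /Rweight hE eqxx mul1r.
have ez1 : s2 / s1 * s1 / s2 = 1 by field; rewrite hs1 hs2.
rewrite ez1 (_ : j2%:Z - j1%:Z = (j2 - j1)%N%:Z); last by rewrite subzn // ltnW.
rewrite qpochP (@P_eq0 _ _ _ _ 0) ?subn_gt0 ?mulr1 ?expr0 //.
by rewrite !(mulr0, mul0r).
Qed.
End Main.


Section Inst.
Variable R : realFieldType.
Variable q : R.
Hypotheses (hq0 : 0 < q) (hq1 : q < 1).

Let Q := rf_const q.
Let s1 := rf_s1 R.
Let s2 := rf_s2 R.

Lemma i_hq : Q != 0.
Proof. by rewrite /Q /rf_const tofrac_eq0 !polyC_eq0 gt_eqF. Qed.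

Lemma i_hs1 : s1 != 0.
Proof. by rewrite /s1 /rf_s1 tofrac_eq0 polyC_eq0 polyX_eq0. Qed.

Lemma i_hs2 : s2 != 0.
Proof. by rewrite /s2 /rf_s2 tofrac_eq0 polyX_eq0. Qed.

Lemma i_hqq i : 1 - Q ^+ i.+1 != 0.
Proof.
have -> : 1 - Q ^+ i.+1 = FracField.tofrac ((1 - q ^+ i.+1)%:P%:P).
  by rewrite /Q /rf_const !rmorphB !rmorph1 !rmorphXn.
rewrite tofrac_eq0 !polyC_eq0 subr_eq0 eq_sym lt_eqF //.
by rewrite exprn_ilt1 // ltW.
Qed.

Lemma i_h1 i : 1 - s1 ^+ 2 * Q ^+ i != 0.
Proof.
have -> : 1 - s1 ^+ 2 * Q ^+ i =
    FracField.tofrac ((1 - 'X ^+ 2 * (q ^+ i)%:P)%:P).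
  by rewrite /Q /s1 /rf_const /rf_s1 !rmorphB !rmorph1 !rmorphM !rmorphXn.
rewrite tofrac_eq0 polyC_eq0; apply/eqP => /(congr1 (fun p : {poly R} => p`_0)).
by rewrite coefB coef1 coefXnM /= coef0 subr0 => /eqP; rewrite oner_eq0.
Qed.

Lemma i_h1q : s1 ^+ 2 != Q.
Proof.
rewrite /Q /s1 /rf_const /rf_s1 -rmorphXn tofrac_eq -rmorphXn.
rewrite (inj_eq polyC_inj); apply/eqP => /(congr1 (fun p : {poly R} => p`_2)).
by rewrite coefXn coefC /= => /eqP; rewrite oner_eq0.
Qed.

Lemma i_h2 i : 1 - s2 ^+ 2 * Q ^+ i != 0.
Proof.
have -> : 1 - s2 ^+ 2 * Q ^+ i =
    FracField.tofrac (1 - 'X ^+ 2 * ((q ^+ i)%:P)%:P).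
  by rewrite /Q /s2 /rf_const /rf_s2 !rmorphB !rmorph1 !rmorphM !rmorphXn.
rewrite tofrac_eq0; apply/eqP => /(congr1 (fun p : {poly {poly R}} => p`_0)).
by rewrite coefB coef1 coefXnM /= coef0 subr0 => /eqP; rewrite oner_eq0.
Qed.

End Inst.

Theorem proposition3p5 (R : realFieldType) (q : R) (hq0 : 0 < q) (hq1 : q < 1)
    (i1 i2 j1 j2 : nat) :
  let Q := rf_const q in
  let s1 := rf_s1 R in
  let s2 := rf_s2 R in
  Rweight Q (s2 / s1) s1 s2 i1 i2 j1 j2 =
  (i1 + j2 == i2 + j1)%N%:R * (j2 <= j1)%N%:R *
  qbb Q (s2 ^+ 2 / s1 ^+ 2) (s2 ^+ 2) j2 j1.
Proof.
move=> Q s1 s2.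
apply: main_gen.
- exact: i_hq.
- exact: i_hs1.
- exact: i_hs2.
- exact: i_hqq.
- exact: i_h1.
- exact: i_h1q.
- exact: i_h2.
Qed.
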